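(* Let $(\{0,1\}^{\mathbb N},\mathbb B_\Pi(\{0,1\}^{\mathbb N}),m,\sigma)$ be an ergodic Markov shift over two symbols, and let $X:\{0,1\}^{\mathbb N}\to\mathbb R$ be a lexicographic-like random variable. Then for every $d\in\mathbb N$ the ordinal partition $\mathcal P^X(d)$ is generating and has the Markov property.
   Context: Markov shift over $A=\{0,\dots,l\}$: given an $(l+1)\times(l+1)$ stochastic matrix $Q=(q_{ij})$ and a stationary probability vector $p=(p_0,\dots,p_l)$ of $Q$ with all $p_a>0$, it is the system $(A^{\mathbb N},\mathbb B_\Pi(A^{\mathbb N}),m,\sigma)$ where $A^{\mathbb N}$ is the space of one-sided sequences $s=(s_0,s_1,\dots)$, $\mathbb B_\Pi$ is the $\sigma$-algebra generated by cylinders $C_{a_0\dots a_{n-1}}=\{s: s_0=a_0,\dots,s_{n-1}=a_{n-1}\}$, $(\sigma s)_j=s_{j+1}$, and $m(C_{a_0\dots a_{n-1}})=p_{a_0}q_{a_0a_1}\cdots q_{a_{n-2}a_{n-1}}$. It is ergodic if every $B$ with $\sigma^{-1}B=B$ has $m(B)\in\{0,1\}$. Lexicographic order: $r\prec s$ iff $r_0<s_0$ or there is $k\in\mathbb N$ with $r_i=s_i$ for $i<k$ and $r_k<s_k$. An observable $X:A^{\mathbb N}\to\mathbb R$ is lexicographic-like if it is injective on a set of full $m$-measure and for all $s\in A^{\mathbb N}$ and $j,n\in\mathbb N_0$: $X(\sigma^j s)\le X(\sigma^n s)$ iff $\sigma^j s\preceq\sigma^n s$. Ordinal pattern: $(x_0,\dots,x_d)$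 has pattern $\pi=(r_0,\dots,r_d)\in\Pi_d$ (permutations of $\{0,\dots,d\}$) if $x_{r_0}\ge\dots\ge x_{r_d}$ and $r_{l-1}>r_l$ whenever $x_{r_{l-1}}=x_{r_l}$. The ordinal partition $\mathcal P^X(d)$ consists of the sets $P_\pi=\{s:(X(\sigma^d s),X(\sigma^{d-1}s),\dots,X(s))\text{ has ordinal pattern }\pi\}$, $\pi\in\Pi_d$. A finite measurable partition $\mathcal G=\{G_0,\dots,G_l\}$ is generating if for every measurable $B$ there is $A$ in the $\sigma$-algebra generated by the sets $\sigma^{-n}(G_i)$, $n\in\mathbb N_0$, with $m(A\triangle B)=0$. A finite partition $\mathcal M=\{M_0,\dots,M_l\}$ has the Markov property if for all $n\in\mathbb N$ and $i_0,\dots,i_n$ with $m(M_{i_0}\cap\sigma^{-1}M_{i_1}\cap\dots\cap\sigma^{-(n-1)}M_{i_{n-1}})>0$, $\frac{m(M_{i_0}\cap\sigma^{-1}M_{i_1}\cap\dots\cap\sigma^{-n}M_{i_n})}{m(M_{i_0}\cap\dots\cap\sigma^{-(n-1)}M_{i_{n-1}})}=\frac{m(M_{i_{n-1}}\cap\sigma^{-1}M_{i_n})}{m(M_{i_{n-1}})}$. *)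

(* Defs.v *)
From Stdlib Require Import Reals Lra List Permutation.
Import ListNotations.
Open Scope R_scope.

(* One-sided sequences over {0,1}; symbol 0 = false, 1 = true. *)
Definition Seq := nat -> bool.
Definition set_of (T : Type) := T -> Prop.

Definition shiftn (n : nat) (s : Seq) : Seq := fun k => s (n + k)%nat.

Inductive gen_sigma {T : Type} (G : set_of T -> Prop) : set_of T -> Prop :=
| gs_base : forall A, G A -> gen_sigma G A
| gs_compl : forall A, gen_sigma G A -> gen_sigma G (fun x => ~ A x)
| gs_union : forall F : nat -> set_of T, (forall n, gen_sigma G (F n)) ->
    gen_sigma G (fun x => exists n, F n x)
| gs_ext : forall A B, gen_sigma G A -> (forall x, A x <-> B x) -> gen_sigma G B.

Definition cylinder (w : list bool) : set_of Seq :=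
  fun s => forall i, (i < length w)%nat -> s i = nth i w false.

Definition measurable (A : set_of Seq) : Prop :=
  gen_sigma (fun E => exists w, E = cylinder w) A.

Definition is_measure (m : set_of Seq -> R) : Prop :=
  m (fun _ => False) = 0 /\
  (forall A, measurable A -> 0 <= m A) /\
  (forall F : nat -> set_of Seq,
      (forall n, measurable (F n)) ->
      (forall i j x, i <> j -> F i x -> F j x -> False) ->
      infinite_sum (fun n => m (F n)) (m (fun x => exists n, F n x))).

Fixpoint mass_tail (Q : bool -> bool -> R) (a : bool) (w : list bool) : R :=
  match w with
  | [] => 1
  | b :: w' => Q a b * mass_tail Q b w'
  end.

Definition cyl_mass (Q : bool -> bool -> R) (p : bool -> R) (w : list bool) : R :=
  match w with
  | [] => 1
  | a :: w' => p a * mass_tail Q a w'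
  end.

Definition stochastic (Q : bool -> bool -> R) : Prop :=
  (forall a b, 0 <= Q a b) /\ (forall a, Q a false + Q a true = 1).

Definition stationary_pos (Q : bool -> bool -> R) (p : bool -> R) : Prop :=
  (forall a, 0 < p a) /\ p false + p true = 1 /\
  (forall b, p false * Q false b + p true * Q true b = p b).

Definition markov_measure (Q : bool -> bool -> R) (p : bool -> R)
    (m : set_of Seq -> R) : Prop :=
  is_measure m /\ forall w, m (cylinder w) = cyl_mass Q p w.

Definition ergodic (m : set_of Seq -> R) : Prop :=
  forall B, measurable B -> (forall s, B (shiftn 1 s) <-> B s) ->
    m B = 0 \/ m B = 1.

Definition lex_lt (r s : Seq) : Prop :=
  exists k, (forall i, (i < k)%nat -> r i = s i) /\ r k = false /\ s k = true.
Definition lex_le (r s : Seq) : Prop := lex_lt r s \/ (forall i, r i = s i).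

Definition random_variable (X : Seq -> R) : Prop :=
  forall c, measurable (fun s => X s <= c).

Definition lexicographic_like (m : set_of Seq -> R) (X : Seq -> R) : Prop :=
  (exists N, measurable N /\ m N = 1 /\
     forall s t, N s -> N t -> X s = X t -> s = t) /\
  (forall s j n, X (shiftn j s) <= X (shiftn n s) <-> lex_le (shiftn j s) (shiftn n s)).

Definition is_perm (d : nat) (r : list nat) : Prop :=
  Permutation r (seq 0 (S d)).

Definition has_pattern (d : nat) (x : nat -> R) (r : list nat) : Prop :=
  forall l, (1 <= l <= d)%nat ->
    x (nth (l - 1) r 0%nat) >= x (nth l r 0%nat) /\
    (x (nth (l - 1) r 0%nat) = x (nth l r 0%nat) ->
       (nth (l - 1) r 0%nat > nth l r 0%nat)%nat).

Definition ord_set (X : Seq -> R) (d : nat) (r : list nat) : set_of Seq :=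
  fun s => has_pattern d (fun i => X (shiftn (d - i) s)) r.

Definition symdiff (A B : set_of Seq) : set_of Seq :=
  fun s => (A s /\ ~ B s) \/ (B s /\ ~ A s).

Definition generating {I : Type} (idx : I -> Prop) (M : I -> set_of Seq)
    (m : set_of Seq -> R) : Prop :=
  forall B, measurable B ->
    exists A, gen_sigma (fun E => exists n i, idx i /\ E = (fun s => M i (shiftn n s))) A
      /\ m (symdiff A B) = 0.

Definition chain_set {I : Type} (M : I -> set_of Seq) (i : nat -> I) (k : nat)
  : set_of Seq :=
  fun s => forall j, (j <= k)%nat -> M (i j) (shiftn j s).

Definition markov_property {I : Type} (idx : I -> Prop) (M : I -> set_of Seq)
    (m : set_of Seq -> R) : Prop :=
  forall (n : nat) (i : nat -> I), (1 <= n)%nat ->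
    (forall j, (j <= n)%nat -> idx (i j)) ->
    m (chain_set M i (n - 1)) > 0 ->
    m (chain_set M i n) / m (chain_set M i (n - 1)) =
    m (fun s => M (i (n - 1)%nat) s /\ M (i n) (shiftn 1 s)) / m (M (i (n - 1)%nat)).

(* Main.v *)
Require Import Defs.
From Stdlib Require Import Reals Lra Lia List Permutation Classical FunctionalExtensionality PropExtensionality IndefiniteDescription Sorting.Sorted.
Import ListNotations.
Open Scope R_scope.

Lemma set_ext {T} (A B : set_of T) : (forall x, A x <-> B x) -> A = B.
Proof. intros H; apply functional_extensionality; intro x; apply propositional_extensionality; auto. Qed.

Definition full : set_of Seq := fun _ => True.
Definition empty : set_of Seq := fun _ => False.

Lemma meas_ext (A B : set_of Seq) : measurable A -> (forall x, A x <-> B x) -> measurable B.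
Proof. intros H1 H2. exact (gs_ext _ A B H1 H2). Qed.

Lemma meas_cyl w : measurable (cylinder w).
Proof. apply gs_base. exists w; reflexivity. Qed.

Lemma meas_full : measurable full.
Proof. apply meas_ext with (cylinder []). apply meas_cyl. intro x; split; intros _; [exact I|]. intros i Hi; simpl in Hi; lia. Qed.

Lemma meas_compl A : measurable A -> measurable (fun s => ~ A s).
Proof. intro H; apply gs_compl; exact H. Qed.

Lemma meas_empty : measurable empty.
Proof. apply meas_ext with (fun s => ~ full s). apply meas_compl, meas_full. unfold full, empty; tauto. Qed.

Lemma meas_cunion (F : nat -> set_of Seq) : (forall n, measurable (F n)) -> measurable (fun s => exists n, F n s).
Proof. intro H; apply gs_union; exact H. Qed.

Lemma meas_cinter (F : nat -> set_of Seq) : (forall n, measurable (F n)) -> measurable (fun s => forall n, F n s).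
Proof. intro H. apply meas_ext with (fun s => ~ exists n, ~ F n s).
  apply meas_compl, meas_cunion; intro n; apply meas_compl, H.
  intro x; split. intros H1 n. apply NNPP; intro H2; apply H1; exists n; exact H2.
  intros H1 [n H2]; apply H2, H1. Qed.

Definition two (A B : set_of Seq) (n : nat) : set_of Seq := match n with O => A | _ => B end.

Lemma meas_or A B : measurable A -> measurable B -> measurable (fun s => A s \/ B s).
Proof. intros HA HB. apply meas_ext with (fun s => exists n, two A B n s).
  apply meas_cunion; intros [|n]; simpl; auto.
  intro x; split. intros [[|n] H]; simpl in H; auto.
  intros [H|H]. exists 0%nat; exact H. exists 1%nat; exact H. Qed.

Lemma meas_and A B : measurable A -> measurable B -> measurable (fun s => A s /\ B s).
Proof. intros HA HB. apply meas_ext with (fun s => forall n, two A B n s).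
  apply meas_cinter; intros [|n]; simpl; auto.
  intro x; split. intros H; split; [apply (H 0%nat)|apply (H 1%nat)].
  intros [H1 H2] [|n]; simpl; auto. Qed.

Lemma meas_const (P : Prop) : measurable (fun _ => P).
Proof. destruct (classic P) as [H|H].
  apply meas_ext with full. apply meas_full. unfold full; tauto.
  apply meas_ext with empty. apply meas_empty. unfold empty; tauto. Qed.

Lemma meas_impl A B : measurable A -> measurable B -> measurable (fun s => A s -> B s).
Proof. intros HA HB. apply meas_ext with (fun s => ~ A s \/ B s).
  apply meas_or; [apply meas_compl|]; auto.
  intro x; split. intros [H|H] H'; tauto. intro H. destruct (classic (A x)); tauto. Qed.

Lemma meas_iff A B : measurable A -> measurable B -> measurable (fun s => A s <-> B s).
Proof. intros HA HB. apply meas_and; apply meas_impl; auto. Qed.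

Lemma cyl_cons b w s : cylinder (b::w) s <-> s 0%nat = b /\ cylinder w (shiftn 1 s).
Proof. unfold cylinder, shiftn; simpl. split.
  intros H; split. apply (H 0%nat); lia. intros i Hi. apply (H (S i)); lia.
  intros [H1 H2] [|i] Hi. exact H1. apply H2; lia. Qed.

Lemma meas_shift1 A : measurable A -> measurable (fun s => A (shiftn 1 s)).
Proof. intro H. induction H.
  - destruct H as [w ->]. apply meas_ext with (fun s => cylinder (false::w) s \/ cylinder (true::w) s).
    apply meas_or; apply meas_cyl.
    intro x; rewrite !cyl_cons. split. intros [[_ H]|[_ H]]; exact H.
    intro H; destruct (x 0%nat); [right|left]; auto.
  - apply meas_compl; auto.
  - apply meas_cunion; auto.
  - apply meas_ext with (fun s => A (shiftn 1 s)); auto.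
Qed.

Lemma meas_shift n A : measurable A -> measurable (fun s => A (shiftn n s)).
Proof. revert A; induction n; intros A H. exact H.
  exact (meas_shift1 _ (IHn A H)). Qed.

Lemma meas_coord j b : measurable (fun s => s j = b).
Proof. apply meas_ext with (fun s => cylinder [b] (shiftn j s)).
  apply meas_shift, meas_cyl.
  intro x; unfold cylinder, shiftn; simpl. split.
  intro H. specialize (H 0%nat ltac:(lia)). rewrite Nat.add_0_r in H; exact H.
  intros H [|i] Hi; [rewrite Nat.add_0_r; exact H| lia]. Qed.

Lemma meas_coord_eq i j : measurable (fun s => s i = s j).
Proof. apply meas_ext with (fun s => (s i = false /\ s j = false) \/ (s i = true /\ s j = true)).
  apply meas_or; apply meas_and; apply meas_coord.
  intro x; destruct (x i), (x j); intuition congruence. Qed.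

Lemma meas_lexle a b : measurable (fun s => lex_le (shiftn a s) (shiftn b s)).
Proof. unfold lex_le, lex_lt, shiftn. apply meas_or.
  - apply meas_cunion; intro k. apply meas_and.
    + apply meas_cinter; intro i. apply meas_impl. apply meas_const. apply meas_coord_eq.
    + apply meas_and; apply meas_coord.
  - apply meas_cinter; intro i; apply meas_coord_eq.
Qed.

Definition disj (F : nat -> set_of Seq) := forall i j x, i <> j -> F i x -> F j x -> False.
Definition PM (nu : set_of Seq -> R) : Prop :=
  nu empty = 0 /\ forall F, (forall n, measurable (F n)) -> disj F ->
    infinite_sum (fun n => nu (F n)) (nu (fun x => exists n, F n x)).

Lemma inf_sum_ev (f : nat -> R) l N : (forall n, (n >= N)%nat -> sum_f_R0 f n = l) -> infinite_sum f l.
Proof. intros H eps Heps. exists N. intros n Hn. rewrite H by exact Hn. unfold R_dist. rewrite Rminus_diag, Rabs_R0. exact Heps. Qed.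

Lemma PM_add nu A B : PM nu -> measurable A -> measurable B -> (forall x, A x -> B x -> False) ->
  nu (fun x => A x \/ B x) = nu A + nu B.
Proof. intros [H0 HF] HA HB Hd.
  set (F := fun n => match n with O => A | 1%nat => B | _ => empty end).
  assert (HFm : forall n, measurable (F n)). { intros [|[|n]]; simpl; auto. apply meas_empty. }
  assert (Hdisj : disj F). { intros [|[|i]] [|[|j]] x Hij; simpl; unfold empty; intros; try lia; eauto. }
  specialize (HF F HFm Hdisj).
  replace (fun x => A x \/ B x) with (fun x => exists n, F n x).
  apply (uniqueness_sum (fun n => nu (F n))). exact HF.
  apply inf_sum_ev with 1%nat. intros n Hn. induction n. lia.
  destruct n. simpl. ring. rewrite tech5, IHn by lia. simpl. rewrite H0. ring.
  apply set_ext. intro x. split. intros [[|[|n]] H]; simpl in H; unfold empty in H; tauto.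
  intros [H|H]. exists 0%nat; exact H. exists 1%nat; exact H. Qed.

Lemma inf_sum_scal f l c : infinite_sum f l -> infinite_sum (fun n => c * f n) (c * l).
Proof. intro H. assert (Hc : Un_cv (fun _ => c) c). { intros e He; exists 0%nat; intros; unfold R_dist; rewrite Rminus_diag, Rabs_R0; exact He. }
  pose proof (CV_mult _ _ _ _ Hc H) as H2. intros e He. destruct (H2 e He) as [N HN]. exists N. intros n Hn.
  specialize (HN n Hn). replace (sum_f_R0 (fun i => c * f i) n) with (c * sum_f_R0 f n). exact HN.
  rewrite scal_sum. apply sum_eq; intros; ring. Qed.

Section M.
Variable m : set_of Seq -> R.
Hypothesis Hm : is_measure m.

Lemma meas_PM : PM m.
Proof. destruct Hm as [H0 [_ H2]]. split; auto. Qed.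

Lemma m_nonneg A : measurable A -> 0 <= m A.
Proof. destruct Hm as [_ [H _]]; auto. Qed.

Lemma m_empty : m empty = 0.
Proof. destruct Hm as [H _]; exact H. Qed.

Lemma m_add A B : measurable A -> measurable B -> (forall x, A x -> B x -> False) ->
  m (fun x => A x \/ B x) = m A + m B.
Proof. apply PM_add, meas_PM. Qed.

Lemma m_split A B : measurable A -> measurable B -> m A = m (fun x => A x /\ B x) + m (fun x => A x /\ ~ B x).
Proof. intros HA HB. rewrite <- m_add. f_equal. apply set_ext; intro x. destruct (classic (B x)); tauto.
  apply meas_and; auto. apply meas_and; auto. apply meas_compl; auto. tauto. Qed.

Lemma m_mono A B : measurable A -> measurable B -> (forall x, A x -> B x) -> m A <= m B.
Proof. intros HA HB Hs. rewrite (m_split B A HB HA).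
  replace (fun x => B x /\ A x) with A. pose proof (m_nonneg (fun x => B x /\ ~ A x)).
  assert (0 <= m (fun x => B x /\ ~ A x)). apply H, meas_and; auto; apply meas_compl; auto. lra.
  apply set_ext; intro x; split; auto. tauto. Qed.

Lemma m_null_union (F : nat -> set_of Seq) : (forall n, measurable (F n)) -> (forall n, m (F n) = 0) ->
  m (fun x => exists n, F n x) = 0.
Proof. intros HFm HF0.
  set (G := fun n x => F n x /\ forall k, (k < n)%nat -> ~ F k x).
  assert (HGm : forall n, measurable (G n)).
  { intro n. apply meas_and; auto. apply meas_cinter; intro k. apply meas_impl. apply meas_const. apply meas_compl; auto. }
  assert (HGd : disj G). { intros i j x Hij [Hi Hi'] [Hj Hj']. destruct (proj1 (Nat.lt_gt_cases i j) Hij) as [H|H].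
     apply (Hj' i H Hi). apply (Hi' j H Hj). }
  assert (HG0 : forall n, m (G n) = 0). { intro n. apply Rle_antisym. rewrite <- (HF0 n). apply m_mono; auto. intros x [H _]; exact H. apply m_nonneg; auto. }
  destruct Hm as [_ [_ HS]]. specialize (HS G HGm HGd).
  replace (fun x => exists n, F n x) with (fun x => exists n, G n x).
  apply (uniqueness_sum (fun n => m (G n))). exact HS. apply inf_sum_ev with 0%nat. intros n _.
  induction n; simpl; rewrite HG0; [reflexivity| rewrite IHn; ring].
  apply set_ext; intro x. split. intros [n [H _]]; exists n; exact H.
  intros [n Hn]. induction n as [n IH] using (well_founded_induction Wf_nat.lt_wf).
  destruct (classic (exists k, (k < n)%nat /\ F k x)) as [[k [Hk1 Hk2]]|Hno].
  apply (IH k Hk1 Hk2). exists n. split; auto. intros k Hk HF. apply Hno; exists k; auto. Qed.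

Lemma m_null_or A B : measurable A -> measurable B -> m A = 0 -> m B = 0 -> m (fun x => A x \/ B x) = 0.
Proof. intros. replace (fun x => A x \/ B x) with (fun x => exists n, two A B n x).
  apply m_null_union. intros [|n]; simpl; auto. intros [|n]; simpl; auto.
  apply set_ext; intro x; split. intros [[|n] H3]; simpl in H3; auto. intros [H3|H3]. exists 0%nat; auto. exists 1%nat; auto. Qed.

Lemma m_null_sub A Z : measurable A -> measurable Z -> m Z = 0 -> (forall x, A x -> Z x) -> m A = 0.
Proof. intros. apply Rle_antisym. rewrite <- H1. apply m_mono; auto. apply m_nonneg; auto. Qed.

Lemma m_eq_mod A B Z : measurable A -> measurable B -> measurable Z -> m Z = 0 ->
  (forall x, ~ Z x -> (A x <-> B x)) -> m A = m B.
Proof. intros HA HB HZ H0 H.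
  rewrite (m_split A Z), (m_split B Z); auto.
  rewrite (m_null_sub (fun x => A x /\ Z x) Z), (m_null_sub (fun x => B x /\ Z x) Z); auto; try (apply meas_and; auto); try tauto.
  f_equal. f_equal. apply set_ext; intro x. specialize (H x). tauto. Qed.


End M.

Lemma cyl_inter w w' : (exists w'', forall s, (cylinder w s /\ cylinder w' s) <-> cylinder w'' s) \/
   (forall s, ~ (cylinder w s /\ cylinder w' s)).
Proof. revert w'; induction w as [|a w IH]; intro w'.
  - left; exists w'; intro s; split; [tauto|]. intro H; split; auto. intros i Hi; simpl in Hi; lia.
  - destruct w' as [|b w'].
    + left; exists (a::w); intro s; split; [tauto|]. intro H; split; auto. intros i Hi; simpl in Hi; lia.
    + destruct (Bool.bool_dec a b) as [<-|Hab].
      * destruct (IH w') as [[c Hc]|Hc].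
        -- left; exists (a::c); intro s. rewrite !cyl_cons, <- Hc. tauto.
        -- right; intro s; rewrite !cyl_cons. intros [[_ H1] [_ H2]]. apply (Hc (shiftn 1 s)); auto.
      * right; intro s; rewrite !cyl_cons. intros [[H1 _] [H2 _]]. congruence.
Qed.

Inductive lam : set_of Seq -> Prop :=
| l_cyl w : lam (cylinder w)
| l_compl A : lam A -> lam (fun s => ~ A s)
| l_dun F : (forall n, lam (F n)) -> disj F -> lam (fun s => exists n, F n s)
| l_ext A B : lam A -> (forall x, A x <-> B x) -> lam B.

Lemma lam_full : lam full.
Proof. apply l_ext with (cylinder []). apply l_cyl. intro x; unfold full; split; auto. intros _ i Hi; simpl in Hi; lia. Qed.
Lemma lam_empty : lam empty.
Proof. apply l_ext with (fun s => ~ full s). apply l_compl, lam_full. unfold full, empty; tauto. Qed.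

Definition three (A B : set_of Seq) (n : nat) : set_of Seq := match n with O => A | 1%nat => B | _ => empty end.

Lemma lam_dun2 A B : lam A -> lam B -> (forall x, A x -> B x -> False) -> lam (fun s => A s \/ B s).
Proof. intros HA HB Hd. apply l_ext with (fun s => exists n, three A B n s).
  apply l_dun. intros [|[|n]]; simpl; auto. apply lam_empty.
  intros [|[|i]] [|[|j]] x Hij; simpl; unfold empty; intros; try lia; eauto.
  intro x; split. intros [[|[|n]] H]; simpl in H; unfold empty in H; tauto.
  intros [H|H]. exists 0%nat; exact H. exists 1%nat; exact H. Qed.

(* C /\ ~Y = ~ (~C \/ (C /\ Y)) *)
Lemma lam_diff C Y : lam (fun s => ~ C s) -> lam (fun s => C s /\ Y s) -> lam (fun s => C s /\ ~ Y s).
Proof. intros H1 H2. apply l_ext with (fun s => ~ ((~ C s) \/ (C s /\ Y s))).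
  apply l_compl. apply lam_dun2; auto. tauto.
  intro x; split. intro H. split. apply NNPP; intro; apply H; left; auto. intro; apply H; right; split; auto.
  apply NNPP; intro; apply H; left; auto. tauto. Qed.

Lemma lam_step1 w Y : lam Y -> lam (fun s => cylinder w s /\ Y s).
Proof. intro H. induction H.
  - destruct (cyl_inter w w0) as [[c Hc]|Hc].
    apply l_ext with (cylinder c). apply l_cyl. intro; rewrite Hc; tauto.
    apply l_ext with empty. apply lam_empty. intro x; unfold empty; specialize (Hc x); tauto.
  - apply lam_diff; auto. apply l_compl, l_cyl.
  - apply l_ext with (fun s => exists n, cylinder w s /\ F n s).
    apply l_dun; auto. intros i j x Hij [_ G1] [_ G2]; eauto.
    intro x; split. intros [n [G1 G2]]; split; eauto. intros [G1 [n G2]]; eauto.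
  - apply l_ext with (fun s => cylinder w s /\ A s); auto. intro x; rewrite H0; tauto.
Qed.

Lemma lam_step2 Z : lam Z -> forall Y, lam Y -> lam (fun s => Z s /\ Y s).
Proof. intros HZ Y H. induction H.
  - apply l_ext with (fun s => cylinder w s /\ Z s). apply lam_step1; auto. tauto.
  - apply lam_diff; auto. apply l_compl; auto.
  - apply l_ext with (fun s => exists n, Z s /\ F n s).
    apply l_dun; auto. intros i j x Hij [_ G1] [_ G2]; eauto.
    intro x; split. intros [n [G1 G2]]; split; eauto. intros [G1 [n G2]]; eauto.
  - apply l_ext with (fun s => Z s /\ A s); auto. intro x; rewrite H0; tauto.
Qed.

Lemma meas_lam A : measurable A -> lam A.
Proof. intro H; induction H.
  - destruct H as [w ->]; apply l_cyl.
  - apply l_compl; auto.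
  - set (Hs := fun n s => forall k, (k < n)%nat -> ~ F k s).
    assert (HH : forall n, lam (Hs n)).
    { induction n. apply l_ext with full. apply lam_full. intro x; unfold full, Hs; split; auto. intros _ k Hk; lia.
      apply l_ext with (fun s => Hs n s /\ ~ F n s). apply lam_step2; auto. apply l_compl; auto.
      intro x; unfold Hs; split. intros [H1 H2] k Hk. destruct (Nat.eq_dec k n) as [->|]; auto. apply H1; lia.
      intro H1; split. intros k Hk; apply H1; lia. apply H1; lia. }
    apply l_ext with (fun s => exists n, F n s /\ Hs n s).
    apply l_dun. intro n; apply lam_step2; auto.
    intros i j x Hij [Hi Hi'] [Hj Hj']. destruct (proj1 (Nat.lt_gt_cases i j) Hij) as [Hl|Hl].
    apply (Hj' i Hl Hi). apply (Hi' j Hl Hj).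
    intro x; split. intros [n [Hn _]]; exists n; exact Hn.
    intros [n Hn]. induction n as [n IH] using (well_founded_induction Wf_nat.lt_wf).
    destruct (classic (exists k, (k < n)%nat /\ F k x)) as [[k [Hk1 Hk2]]|Hno].
    apply (IH k Hk1 Hk2). exists n. split; auto. intros k Hk HF. apply Hno; exists k; auto.
  - apply l_ext with A; auto.
Qed.

Lemma lam_meas A : lam A -> measurable A.
Proof. intro H; induction H.
  apply meas_cyl. apply meas_compl; auto. apply meas_cunion; auto. apply meas_ext with A; auto. Qed.

Lemma unique_ext nu1 nu2 : PM nu1 -> PM nu2 -> (forall w, nu1 (cylinder w) = nu2 (cylinder w)) ->
  forall A, measurable A -> nu1 A = nu2 A.
Proof. intros H1 H2 Hc A HA. apply meas_lam in HA. induction HA.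
  - apply Hc.
  - assert (HAm := lam_meas _ HA).
    assert (Hfull : forall nu, PM nu -> nu (cylinder []) = nu A + nu (fun s => ~ A s)).
    { intros nu Hnu. rewrite <- PM_add; auto. f_equal. apply set_ext; intro x. split. intros _; apply classic.
      intros _ i Hi; simpl in Hi; lia. apply meas_compl; auto. }
    pose proof (Hfull _ H1); pose proof (Hfull _ H2). rewrite (Hc []) in H. lra.
  - assert (Hm : forall n, measurable (F n)) by (intro; apply lam_meas; auto).
    apply (uniqueness_sum (fun n => nu1 (F n))). apply H1; auto.
    replace (fun n => nu1 (F n)) with (fun n => nu2 (F n)). apply H2; auto.
    apply functional_extensionality; intro n; symmetry; auto.
  - replace B with A; auto. apply set_ext; auto.
Qed.

Lemma cyl_app u w s : cylinder (u ++ w) s <-> cylinder u s /\ cylinder w (shiftn (length u) s).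
Proof. revert s; induction u as [|a u IH]; intro s; simpl.
  - split; [intro H; split; [intros i Hi; simpl in Hi; lia| exact H] | tauto].
  - rewrite !cyl_cons, IH. simpl. tauto. Qed.

Lemma mass_tail_app Q a u c v : mass_tail Q a (u ++ c :: v) = mass_tail Q a (u ++ [c]) * mass_tail Q c v.
Proof. revert a; induction u as [|b u IH]; intro a; simpl. ring. rewrite IH; ring. Qed.

Lemma cyl_mass_app Q p u c v : cyl_mass Q p (u ++ c :: v) = cyl_mass Q p (u ++ [c]) * mass_tail Q c v.
Proof. destruct u as [|a u]; simpl. ring. rewrite mass_tail_app; ring. Qed.

Section MK.
Variables (Q : bool -> bool -> R) (p : bool -> R) (m : set_of Seq -> R).
Hypotheses (HQ : stochastic Q) (Hp : stationary_pos Q p) (Hmk : markov_measure Q p m).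

Lemma Hm : is_measure m. Proof. apply Hmk. Qed.
Lemma m_cyl w : m (cylinder w) = cyl_mass Q p w. Proof. apply Hmk. Qed.

Lemma m_full : m full = 1.
Proof. replace full with (cylinder []). apply m_cyl. apply set_ext; intro x; unfold full; split; auto. intros _ i Hi; simpl in Hi; lia. Qed.

Lemma m_compl A : measurable A -> m (fun s => ~ A s) = 1 - m A.
Proof. intro HA. rewrite <- m_full. rewrite (m_split m Hm full A meas_full HA).
  replace (fun x => full x /\ A x) with A. replace (fun x => full x /\ ~ A x) with (fun x => ~ A x). ring.
  apply set_ext; unfold full; tauto. apply set_ext; unfold full; tauto. Qed.

Lemma PM_shift : PM (fun A => m (fun s => A (shiftn 1 s))).
Proof. split. exact (m_empty m Hm). intros F HF Hd.
  apply (proj2 (meas_PM m Hm) (fun n s => F n (shiftn 1 s))). intro n; apply meas_shift1; auto.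
  intros i j x Hij; apply Hd; auto. Qed.

Lemma m_shift1 A : measurable A -> m (fun s => A (shiftn 1 s)) = m A.
Proof. intro HA. apply (unique_ext (fun A => m (fun s => A (shiftn 1 s))) m PM_shift (meas_PM m Hm)); auto.
  intros [|b w].
  - f_equal. apply set_ext; intro x; split; intros _ i Hi; simpl in Hi; lia.
  - replace (fun s => cylinder (b :: w) (shiftn 1 s)) with (fun s => cylinder (false::b::w) s \/ cylinder (true::b::w) s).
    rewrite m_add, !m_cyl; try apply meas_cyl. 2: apply Hm.
    simpl. destruct Hp as [_ [_ Hs]]. rewrite <- (Hs b). ring.
    intros x; rewrite !cyl_cons; intros [H1 _] [H2 _]; congruence.
    apply set_ext; intro x; rewrite !cyl_cons. split. intros [[_ H]|[_ H]]; exact H.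
    intro H; destruct (x 0%nat); [right|left]; auto.
Qed.

Lemma m_shift n A : measurable A -> m (fun s => A (shiftn n s)) = m A.
Proof. revert A; induction n; intros A HA. reflexivity.
  change (m (fun s => (fun t => A (shiftn n t)) (shiftn 1 s)) = m A).
  rewrite m_shift1. apply IHn; auto. apply meas_shift; auto. Qed.

Lemma p_pos c : 0 < p c. Proof. apply Hp. Qed.

Lemma m_cyl1 c : m (cylinder [c]) = p c.
Proof. rewrite m_cyl; simpl; ring. Qed.

Lemma product u c Y : measurable Y ->
  m (fun s => cylinder (u ++ [c]) s /\ Y (shiftn (length u) s)) =
  cyl_mass Q p (u ++ [c]) / p c * m (fun s => cylinder [c] s /\ Y s).
Proof. intro HY. set (M := cyl_mass Q p (u ++ [c])).
  pose proof (p_pos c) as Hpc.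
  apply (unique_ext (fun Y => m (fun s => cylinder (u ++ [c]) s /\ Y (shiftn (length u) s)))
                    (fun Y => M / p c * m (fun s => cylinder [c] s /\ Y s))); auto.
  - split. replace (fun s => cylinder (u ++ [c]) s /\ empty (shiftn (length u) s)) with empty. apply (m_empty m Hm).
    apply set_ext; unfold empty; tauto.
    intros F HF Hd.
    replace (fun s => cylinder (u ++ [c]) s /\ (exists n, F n (shiftn (length u) s))) with
      (fun x => exists n, cylinder (u ++ [c]) x /\ F n (shiftn (length u) x)).
    apply (proj2 (meas_PM m Hm) (fun n s => cylinder (u ++ [c]) s /\ F n (shiftn (length u) s))).
    intro n; apply meas_and; [apply meas_cyl| apply meas_shift; auto].
    intros i j x Hij [_ H1] [_ H2]; eapply Hd; eauto.
    apply set_ext; intro x; split. intros [n [H1 H2]]; eauto. intros [H1 [n H2]]; eauto.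
  - split. replace (fun s => cylinder [c] s /\ empty s) with empty. rewrite (m_empty m Hm); ring.
    apply set_ext; unfold empty; tauto.
    intros F HF Hd. apply inf_sum_scal.
    replace (fun s => cylinder [c] s /\ (exists n, F n s)) with
      (fun x => exists n, cylinder [c] x /\ F n x).
    apply (proj2 (meas_PM m Hm) (fun n s => cylinder [c] s /\ F n s)).
    intro n; apply meas_and; [apply meas_cyl| auto].
    intros i j x Hij [_ H1] [_ H2]; eapply Hd; eauto.
    apply set_ext; intro x; split. intros [n [H1 H2]]; eauto. intros [H1 [n H2]]; eauto.
  - intros [|b v].
    + replace (fun s => cylinder (u ++ [c]) s /\ cylinder [] (shiftn (length u) s)) with (cylinder (u ++ [c])).
      replace (fun s => cylinder [c] s /\ cylinder [] s) with (cylinder [c]).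
      rewrite m_cyl1. unfold M; rewrite m_cyl. field. lra.
      apply set_ext; intro; split; [intro H; split; auto; intros i Hi; simpl in Hi; lia| tauto].
      apply set_ext; intro; split; [intro H; split; auto; intros i Hi; simpl in Hi; lia| tauto].
    + destruct (Bool.bool_dec b c) as [->|Hbc].
      * replace (fun s => cylinder (u ++ [c]) s /\ cylinder (c :: v) (shiftn (length u) s)) with (cylinder (u ++ c :: v)).
        replace (fun s => cylinder [c] s /\ cylinder (c::v) s) with (cylinder (c :: v)).
        rewrite !m_cyl. unfold M. rewrite cyl_mass_app. simpl. field. lra.
        apply set_ext; intro s; rewrite !cyl_cons. split. intros [H1 H2]; split; auto; split; auto. intros i Hi; simpl in Hi; lia. tauto.
        apply set_ext; intro s. rewrite cyl_app, cyl_app. rewrite (cyl_cons c v), (cyl_cons c []).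
        split. intros [H1 [H2 H3]]. split. split; auto. split; auto. intros i Hi; simpl in Hi; lia. split; auto.
        intros [[H1 [H2 _]] H3]. split; auto.
      * replace (fun s => cylinder (u ++ [c]) s /\ cylinder (b :: v) (shiftn (length u) s)) with empty.
        replace (fun s => cylinder [c] s /\ cylinder (b::v) s) with empty. rewrite (m_empty m Hm). ring.
        apply set_ext; intro s; unfold empty. rewrite !cyl_cons. intuition congruence.
        apply set_ext; intro s; unfold empty. rewrite cyl_app, cyl_cons, cyl_cons. intuition congruence.
Qed.

End MK.

Definition Per (q : nat) : set_of Seq := fun s => forall j, s (q + j)%nat = s j.

Lemma meas_Per q : measurable (Per q).
Proof. apply meas_cinter; intro j; apply meas_coord_eq. Qed.

Lemma per_unique q s t : (1 <= q)%nat -> Per q s -> Per q t -> (forall i, (i < q)%nat -> s i = t i) -> forall k, s k = t k.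
Proof. intros Hq Hs Ht H k. induction k as [k IH] using (well_founded_induction Wf_nat.lt_wf).
  destruct (Nat.lt_ge_cases k q). auto.
  replace k with (q + (k - q))%nat by lia. rewrite Hs, Ht. apply IH; lia. Qed.

Fixpoint pre (x : Seq) (n : nat) : list bool := match n with O => [] | S n => x 0%nat :: pre (shiftn 1 x) n end.
Lemma pre_cyl x n : cylinder (pre x n) x.
Proof. revert x; induction n; intro x. intros i Hi; simpl in Hi; lia. simpl. rewrite cyl_cons. split; auto. Qed.
Lemma pre_len x n : length (pre x n) = n.
Proof. revert x; induction n; intro x; simpl; auto. Qed.

Lemma cyl2 b b' j s : cylinder [b; b'] (shiftn j s) <-> s j = b /\ s (S j) = b'.
Proof. rewrite !cyl_cons. unfold shiftn. rewrite Nat.add_0_r. replace (j + 1)%nat with (S j) by lia.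
  split. intros [H1 [H2 _]]. split; auto. rewrite <- H2. unfold shiftn. f_equal; lia.
  intros [H1 H2]. split; auto. split. unfold shiftn. rewrite <- H2; f_equal; lia. intros i Hi; simpl in Hi; lia. Qed.

Lemma first_switch (s : Seq) b k : s 0%nat = b -> s k <> b -> exists j, s j = b /\ s (S j) <> b.
Proof. revert b; induction k; intros b H0 Hk. congruence.
  destruct (Bool.bool_dec (s k) b). exists k; auto. apply IHk; auto. Qed.

Lemma small_zero (a : R) : 0 <= a -> (forall eps, 0 < eps -> a < eps) -> a = 0.
Proof. intros H1 H2. destruct (Req_dec a 0); auto. specialize (H2 a). lra. Qed.

Lemma geom_small rho : 0 <= rho < 1 -> forall eps, 0 < eps -> exists K, rho ^ K < eps.
Proof. intros Hr eps He. destruct (pow_lt_1_zero rho ltac:(rewrite Rabs_right; lra) eps He) as [N HN].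
  exists N. specialize (HN N (le_n _)). rewrite Rabs_right in HN; auto. apply Rle_ge, pow_le; lra. Qed.

Section NULL.
Variables (Q : bool -> bool -> R) (p : bool -> R) (m : set_of Seq -> R).
Hypotheses (HQ : stochastic Q) (Hp : stationary_pos Q p) (Hmk : markov_measure Q p m).

Let Hm := Hm Q p m Hmk.

Lemma Q_le1 a b : Q a b <= 1.
Proof. destruct HQ as [H1 H2]. specialize (H2 a). pose proof (H1 a false); pose proof (H1 a true). destruct b; lra. Qed.
Lemma Q_ge0 a b : 0 <= Q a b. Proof. apply HQ. Qed.
Lemma p_le1 a : p a <= 1.
Proof. destruct Hp as [H1 [H2 _]]. pose proof (H1 false); pose proof (H1 true). destruct a; lra. Qed.

Lemma mt_bounds a w : 0 <= mass_tail Q a w <= 1.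
Proof. revert a; induction w as [|b w IH]; intro a; simpl. lra.
  pose proof (Q_ge0 a b); pose proof (Q_le1 a b); destruct (IH b). split. apply Rmult_le_pos; auto.
  replace 1 with (1*1) by ring. apply Rmult_le_compat; lra. Qed.

Definition small (x : Seq) := forall eps, 0 < eps -> exists w, cylinder w x /\ cyl_mass Q p w < eps.

Lemma m_point_null Y : measurable Y -> (forall x y, Y x -> Y y -> x = y) -> (forall x, Y x -> small x) -> m Y = 0.
Proof. intros HY Hu Hs. destruct (classic (exists x, Y x)) as [[x Hx]|Hno].
  - apply small_zero. apply m_nonneg; auto. intros eps He. destruct (Hs x Hx eps He) as [w [Hw1 Hw2]].
    eapply Rle_lt_trans; [|exact Hw2]. rewrite <- (m_cyl Q p m Hmk). apply m_mono; auto. apply meas_cyl.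
    intros y Hy. rewrite (Hu y x Hy Hx). exact Hw1.
  - replace Y with empty. apply m_empty; auto. apply set_ext; intro x; unfold empty; split; [tauto|]. intro; apply Hno; eauto. Qed.

Lemma words_null Y L : measurable Y -> forall u, (forall w, length w = L -> m (fun s => Y s /\ cylinder (u ++ w) s) = 0) ->
  m (fun s => Y s /\ cylinder u s) = 0.
Proof. intro HY. induction L; intros u H.
  - specialize (H [] eq_refl). rewrite app_nil_r in H; exact H.
  - rewrite (m_split m Hm _ (cylinder (u ++ [false]))).
    replace (fun x => (Y x /\ cylinder u x) /\ cylinder (u ++ [false]) x) with (fun x => Y x /\ cylinder (u ++ [false]) x).
    replace (fun x => (Y x /\ cylinder u x) /\ ~ cylinder (u ++ [false]) x) with (fun x => Y x /\ cylinder (u ++ [true]) x).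
    rewrite (IHL (u ++ [false])), (IHL (u ++ [true])). ring.
    intros w Hw. rewrite <- app_assoc. apply H. simpl; lia.
    intros w Hw. rewrite <- app_assoc. apply H. simpl; lia.
    + apply set_ext; intro x. rewrite !cyl_app, !cyl_cons.
      assert (E : cylinder [] (shiftn 1 (shiftn (length u) x))) by (intros i Hi; simpl in Hi; lia).
      destruct (shiftn (length u) x 0%nat); intuition congruence.
    + apply set_ext; intro x. rewrite !cyl_app, !cyl_cons. tauto.
    + apply meas_and; auto; apply meas_cyl.
    + apply meas_cyl.
Qed.

Lemma Per_null q : (1 <= q)%nat -> (forall x, Per q x -> small x) -> m (Per q) = 0.
Proof. intros Hq Hs. replace (Per q) with (fun s => Per q s /\ cylinder [] s).
  apply (words_null _ q (meas_Per q) []). intros w Hw. simpl.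
  apply m_point_null. apply meas_and; [apply meas_Per|apply meas_cyl].
  intros x y [Hx1 Hx2] [Hy1 Hy2]. apply functional_extensionality. apply (per_unique q); auto.
  intros i Hi. rewrite (Hx2 i), (Hy2 i); auto; lia.
  intros x [H _]; auto.
  apply set_ext; intro x; split; [tauto|]. intro; split; auto; intros i Hi; simpl in Hi; lia. Qed.

Lemma small_const (c : bool) x : Q c c < 1 -> (forall k, x k = c) -> small x.
Proof. intros Hc Hx eps He. destruct (geom_small (Q c c) ltac:(pose proof (Q_ge0 c c); lra) eps He) as [K HK].
  exists (repeat c (S K)). split.
  - intros i Hi. rewrite Hx. rewrite nth_repeat_lt; auto. rewrite repeat_length in Hi; auto.
  - simpl. assert (H : forall K, mass_tail Q c (repeat c K) = Q c c ^ K).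
    { induction K0; simpl; auto. rewrite IHK0; ring. }
    rewrite H. pose proof (p_le1 c). pose proof (pow_le (Q c c) K (Q_ge0 c c)).
    eapply Rle_lt_trans; [|exact HK]. replace (Q c c ^ K) with (1 * Q c c ^ K) at 2 by ring.
    apply Rmult_le_compat_r; auto. Qed.

Definition lam0 := Rmax (Rmax (Q false false) (Q true true)) (Q false true * Q true false).

Lemma two_trans a b c : Q a b * Q b c <= lam0.
Proof. unfold lam0. pose proof (Q_ge0 a b); pose proof (Q_ge0 b c); pose proof (Q_le1 a b); pose proof (Q_le1 b c).
  pose proof (Rmax_l (Rmax (Q false false) (Q true true)) (Q false true * Q true false)) as M1.
  pose proof (Rmax_r (Rmax (Q false false) (Q true true)) (Q false true * Q true false)) as M2.
  pose proof (Rmax_l (Q false false) (Q true true)) as M3. pose proof (Rmax_r (Q false false) (Q true true)) as M4.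
  destruct a, b, c; try nra. Qed.

Lemma small_all x : lam0 < 1 -> small x.
Proof. intros Hl eps He. assert (H0 : 0 <= lam0). { pose proof (two_trans false false false). pose proof (Q_ge0 false false). nra. }
  destruct (geom_small lam0 ltac:(lra) eps He) as [K HK].
  exists (pre x (S (2 * K))). split. apply pre_cyl.
  assert (Hb : forall K a w, (length w >= 2 * K)%nat -> mass_tail Q a w <= lam0 ^ K).
  { induction K0; intros a w Hw. simpl. apply mt_bounds.
    destruct w as [|b [|c w]]; simpl in Hw; try lia. simpl.
    pose proof (two_trans a b c). pose proof (Q_ge0 a b); pose proof (Q_ge0 b c). pose proof (mt_bounds c w).
    specialize (IHK0 c w ltac:(lia)). rewrite <- Rmult_assoc. apply Rmult_le_compat; try nra. }
  simpl. eapply Rle_lt_trans; [|exact HK]. pose proof (p_le1 (x 0%nat)). pose proof (p_pos Q p Hp (x 0%nat)).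
  specialize (Hb K (x 0%nat) (pre (shiftn 1 x) (K + (K + 0))) ltac:(rewrite pre_len; lia)).
  pose proof (mt_bounds (x 0%nat) (pre (shiftn 1 x) (K + (K + 0)))). nra. Qed.

Lemma meas_evconst b : measurable (fun s : Seq => exists N, forall k, (N <= k)%nat -> s k = b).
Proof. apply meas_cunion; intro N. apply meas_cinter; intro k. apply meas_impl. apply meas_const. apply meas_coord. Qed.

Lemma not_Q00_1 : ergodic m -> Q false false <> 1.
Proof. intros Herg H00.
  pose proof HQ as [HQ0 HQs]. pose proof Hp as [Hpp [Hp1 Hps]].
  assert (H01 : Q false true = 0) by (specialize (HQs false); lra).
  assert (H10 : Q true false = 0). { specialize (Hps false). rewrite H00 in Hps. pose proof (Hpp true). nra. }
  assert (H11 : Q true true = 1) by (specialize (HQs true); lra).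
  assert (HZm : forall b, measurable (fun s : Seq => forall k, s k = b)) by (intro; apply meas_cinter; intro; apply meas_coord).
  assert (HZ : forall b, m (fun s : Seq => forall k, s k = b) = p b).
  { intro b. rewrite <- (m_cyl1 Q p m Hmk b). symmetry.
    rewrite (m_split m Hm (cylinder [b]) (fun s : Seq => forall k, s k = b)); try apply meas_cyl; auto.
    replace (fun x => cylinder [b] x /\ (forall k, x k = b)) with (fun s : Seq => forall k, s k = b).
    rewrite (m_null_sub m Hm (fun x => cylinder [b] x /\ ~ (forall k, x k = b)) (fun s => exists j, cylinder [b; negb b] (shiftn j s))). ring.
    apply meas_and. apply meas_cyl. apply meas_compl; auto.
    apply meas_cunion; intro; apply meas_shift, meas_cyl.
    apply (m_null_union m Hm). intro; apply meas_shift, meas_cyl. intro j. rewrite (m_shift Q p m Hp Hmk). rewrite (m_cyl Q p m Hmk).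
    simpl. destruct b; simpl; [rewrite H10|rewrite H01]; ring. apply meas_cyl.
    intros x [Hx1 Hx2]. destruct (not_all_ex_not _ _ Hx2) as [k Hk].
    assert (Hx0 : x 0%nat = b) by (apply (Hx1 0%nat); simpl; lia).
    destruct (first_switch x b k Hx0 Hk) as [j [Hj1 Hj2]]. exists j. apply cyl2. split; auto. destruct b, (x (S j)); simpl in *; congruence.
    apply set_ext; intro x; split. intro H; split; auto. intros i Hi. simpl in Hi. assert (i = 0%nat) by lia; subst; apply H. tauto. }
  set (B := fun s : Seq => exists N, forall k, (N <= k)%nat -> s k = false).
  assert (HBm : measurable B) by apply meas_evconst.
  assert (HBi : forall s, B (shiftn 1 s) <-> B s).
  { intro s; unfold B, shiftn; split.
    intros [N HN]. exists (S N). intros k Hk. replace k with (1 + (k - 1))%nat by lia. apply HN; lia.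
    intros [N HN]. exists N. intros k Hk. apply HN; lia. }
  assert (H1 : p false <= m B). { rewrite <- HZ. apply m_mono; auto. intros x Hx. exists 0%nat; auto. }
  assert (H2 : p true <= m (fun s => ~ B s)). { rewrite <- HZ. apply m_mono; auto. apply meas_compl; auto.
     intros x Hx [N HN]. specialize (HN N (le_n _)). rewrite Hx in HN; discriminate. }
  rewrite (m_compl Q p m Hmk) in H2; auto. pose proof (Hpp false); pose proof (Hpp true).
  destruct (Herg B HBm HBi); lra.
Qed.

Lemma Q00_lt1 : ergodic m -> Q false false < 1.
Proof. intro He. pose proof (not_Q00_1 He). destruct (Rle_lt_or_eq_dec _ _ (Q_le1 false false)); auto. contradiction. Qed.

Lemma Q11_lt1 : ergodic m -> Q true true < 1.
Proof. intro He. destruct (Rle_lt_or_eq_dec _ _ (Q_le1 true true)) as [|H]; auto.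
  exfalso. apply (not_Q00_1 He). pose proof HQ as [HQ0 HQs]. pose proof Hp as [Hpp [Hp1 Hps]].
  assert (H10 : Q true false = 0) by (specialize (HQs true); lra).
  specialize (Hps true). rewrite H in Hps. pose proof (Hpp false). pose proof (HQs false).
  assert (Q false true = 0) by nra. lra. Qed.

End NULL.

Definition Rrel (x : nat -> R) (i j : nat) : Prop := x i > x j \/ (x i = x j /\ (i > j)%nat).

Lemma Rrel_trans x a b c : Rrel x a b -> Rrel x b c -> Rrel x a c.
Proof. unfold Rrel; intros [H1|[H1 H1']] [H2|[H2 H2']]; try (left; lra). right; split; [lra|lia]. Qed.

Lemma Rrel_total x a b : a <> b -> Rrel x a b \/ Rrel x b a.
Proof. intro H. unfold Rrel. destruct (Rtotal_order (x a) (x b)) as [H1|[H1|H1]].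
  right; left; lra. destruct (Nat.lt_total a b) as [H2|[H2|H2]].
  right; right; split; auto; lia. contradiction. left; right; split; auto; lia. left; left; lra. Qed.

Lemma insert_ex x a r : StronglySorted (Rrel x) r -> ~ In a r ->
  exists r', Permutation r' (a :: r) /\ StronglySorted (Rrel x) r'.
Proof. induction r as [|b r IH]; intros Hs Hn.
  - exists [a]; split; auto. constructor; auto.
  - apply StronglySorted_inv in Hs as [Hs Hf].
    destruct (classic (Rrel x a b)) as [Hab|Hab].
    + exists (a :: b :: r); split; auto. constructor; [constructor; auto|].
      constructor; auto. rewrite Forall_forall in *. intros c Hc. apply Rrel_trans with b; auto.
    + assert (Hba : Rrel x b a). { destruct (Rrel_total x a b) as [H|H]; auto. intro; subst; apply Hn; left; auto. contradiction. }
      destruct (IH Hs ltac:(intro; apply Hn; right; auto)) as [r'' [Hp Hs'']].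
      exists (b :: r''); split. rewrite Hp. apply perm_swap. constructor; auto.
      rewrite Forall_forall in *. intros c Hc. apply (Permutation_in _ Hp) in Hc. destruct Hc as [<-|Hc]; auto.
Qed.

Lemma sort_ex x l : NoDup l -> exists r, Permutation r l /\ StronglySorted (Rrel x) r.
Proof. induction l as [|a l IH]; intro Hn.
  - exists []; split; auto. constructor.
  - apply NoDup_cons_iff in Hn as [Ha Hn]. destruct (IH Hn) as [r [Hp Hs]].
    destruct (insert_ex x a r Hs) as [r' [Hp' Hs']]. intro H; apply Ha. apply (Permutation_in _ Hp H).
    exists r'; split; auto. rewrite Hp'. apply perm_skip; auto. Qed.

Lemma ss_adj x r : StronglySorted (Rrel x) r -> forall k, (S k < length r)%nat -> Rrel x (nth k r 0%nat) (nth (S k) r 0%nat).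
Proof. induction r as [|a r IH]; intros Hs k Hk; simpl in Hk. lia.
  apply StronglySorted_inv in Hs as [Hs Hf]. destruct k.
  - destruct r as [|b r]; simpl in Hk. lia. simpl. inversion Hf; auto.
  - simpl. apply IH; auto; lia. Qed.

Lemma pattern_ex d x : exists r, is_perm d r /\ has_pattern d x r.
Proof. destruct (sort_ex x (seq 0 (S d)) (seq_NoDup _ _)) as [r [Hp Hs]].
  exists r; split. exact Hp. intros l Hl.
  assert (Hlen : length r = S d) by (rewrite (Permutation_length Hp), length_seq; auto).
  pose proof (ss_adj x r Hs (l - 1) ltac:(lia)) as H. replace (S (l - 1)) with l in H by lia.
  destruct H as [H|[H1 H2]]. split. lra. intro; lra. split. lra. intros; lia. Qed.

Lemma perm_len d r : is_perm d r -> length r = S d.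
Proof. intro H. rewrite (Permutation_length H), length_seq; auto. Qed.

Lemma perm_range d r l : is_perm d r -> (l <= d)%nat -> (nth l r 0%nat <= d)%nat.
Proof. intros H Hl. assert (Hi : In (nth l r 0%nat) (seq 0 (S d))). { apply (Permutation_in _ H). apply nth_In. rewrite (perm_len d r H); lia. }
  apply in_seq in Hi. lia. Qed.

Lemma perm_pos d r i : is_perm d r -> (i <= d)%nat -> exists q, (q <= d)%nat /\ nth q r 0%nat = i.
Proof. intros H Hi. assert (Hin : In i r). { apply (Permutation_in _ (Permutation_sym H)). apply in_seq; lia. }
  destruct (In_nth r i 0%nat Hin) as [q [Hq1 Hq2]]. exists q; split; auto. rewrite (perm_len d r H) in Hq1; lia. Qed.

Lemma pat_det d x y r : is_perm d r -> (forall i j, (i <= d)%nat -> (j <= d)%nat -> (x i <= x j <-> y i <= y j)) ->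
  has_pattern d x r -> has_pattern d y r.
Proof. intros Hp H Hx l Hl. specialize (Hx l Hl).
  pose proof (perm_range d r (l - 1) Hp ltac:(lia)). pose proof (perm_range d r l Hp ltac:(lia)).
  set (a := nth (l - 1) r 0%nat) in *. set (b := nth l r 0%nat) in *.
  destruct Hx as [G1 G2]. pose proof (H a b ltac:(auto) ltac:(auto)) as Hab. pose proof (H b a ltac:(auto) ltac:(auto)) as Hba.
  split. apply Rle_ge, Hba, Rge_le, G1. intro He. apply G2. apply Rle_antisym. apply Hab; rewrite He; lra. apply Hba; rewrite He; lra. Qed.

Lemma pat_chain d x r : has_pattern d x r -> forall p q, (p <= q <= d)%nat -> x (nth p r 0%nat) >= x (nth q r 0%nat).
Proof. intros H p q Hpq. induction q. assert (p = 0%nat) by lia; subst; lra.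
  destruct (Nat.eq_dec p (S q)). subst; lra.
  specialize (IHq ltac:(lia)). destruct (H (S q) ltac:(lia)) as [H1 _]. replace (S q - 1)%nat with q in H1 by lia. lra. Qed.

Lemma pat_gt_pos d x r : is_perm d r -> has_pattern d x r -> forall i j, (i <= d)%nat -> (j <= d)%nat -> x i > x j ->
  exists pi pj, (pi < pj <= d)%nat /\ nth pi r 0%nat = i /\ nth pj r 0%nat = j.
Proof. intros Hp H i j Hi Hj Hx. destruct (perm_pos d r i Hp Hi) as [pi [Hpi1 Hpi2]]. destruct (perm_pos d r j Hp Hj) as [pj [Hpj1 Hpj2]].
  exists pi, pj. destruct (Nat.lt_ge_cases pi pj). repeat split; auto.
  exfalso. pose proof (pat_chain d x r H pj pi ltac:(lia)). rewrite Hpi2, Hpj2 in H1. lra. Qed.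

Lemma pat_pair d x y r : is_perm d r -> has_pattern d x r -> has_pattern d y r -> forall i j, (i <= d)%nat -> (j <= d)%nat ->
  x i <> x j -> y i <> y j -> (x i <= x j <-> y i <= y j).
Proof. intros Hp Hx Hy i j Hi Hj Hxn Hyn.
  destruct (perm_pos d r i Hp Hi) as [pi [Hpi1 Hpi2]]. destruct (perm_pos d r j Hp Hj) as [pj [Hpj1 Hpj2]].
  assert (pi <> pj) by (intro; subst; congruence).
  destruct (Nat.lt_ge_cases pi pj).
  - pose proof (pat_chain d x r Hx pi pj ltac:(lia)). pose proof (pat_chain d y r Hy pi pj ltac:(lia)).
    rewrite Hpi2, Hpj2 in *. split; intro; lra.
  - pose proof (pat_chain d x r Hx pj pi ltac:(lia)). pose proof (pat_chain d y r Hy pj pi ltac:(lia)).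
    rewrite Hpi2, Hpj2 in *. split; intro; lra. Qed.

Lemma shiftn_add a b s : shiftn a (shiftn b s) = shiftn (b + a) s.
Proof. apply functional_extensionality; intro k; unfold shiftn; f_equal; lia. Qed.

Lemma lex_le_refl r : lex_le r r.
Proof. right; auto. Qed.

Lemma lex_le_cons r s : r 0%nat = s 0%nat -> (lex_le r s <-> lex_le (shiftn 1 r) (shiftn 1 s)).
Proof. intro H0. unfold lex_le, lex_lt, shiftn; simpl. split.
  - intros [[k [H1 [H2 H3]]]|H].
    + destruct k. congruence. left; exists k; repeat split; auto. intros i Hi; apply (H1 (S i)); lia.
    + right; intro i; apply H.
  - intros [[k [H1 [H2 H3]]]|H].
    + left; exists (S k); repeat split; auto. intros [|i] Hi; auto. apply H1; lia.
    + right; intros [|i]; auto; apply H.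
Qed.

Lemma lex_le_ft r s : r 0%nat = false -> s 0%nat = true -> lex_le r s.
Proof. intros; left; exists 0%nat; repeat split; auto. intros; lia. Qed.

Lemma lex_lt_not_le r s : lex_lt r s -> ~ lex_le s r.
Proof. intros [k [H1 [H2 H3]]] [[k' [H1' [H2' H3']]]|H].
  - destruct (Nat.lt_total k k') as [Hl|[->|Hl]].
    + specialize (H1' k Hl); congruence.
    + congruence.
    + specialize (H1 k' Hl); congruence.
  - specialize (H k); congruence. Qed.

Lemma lex_le_tf r s : r 0%nat = true -> s 0%nat = false -> ~ lex_le r s.
Proof. intros. apply lex_lt_not_le. exists 0%nat; repeat split; auto. intros; lia. Qed.

Lemma lex_antisym r s : lex_le r s -> lex_le s r -> forall i, r i = s i.
Proof. intros [H|H] H'. exfalso; apply (lex_lt_not_le r s H H'). exact H. Qed.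

Lemma lex_nonconst (s : Seq) (b : bool) (k : nat) : s 0%nat = b -> s k <> b ->
  if b then lex_lt (shiftn 1 s) s else lex_lt s (shiftn 1 s).
Proof. intros H0 Hk.
  assert (Hex : exists j, s (S j) <> b /\ forall i, (i <= j)%nat -> s i = b).
  { induction k as [k IH] using (well_founded_induction Wf_nat.lt_wf).
    destruct k. congruence.
    destruct (classic (exists i, (i <= k)%nat /\ s i <> b)) as [[i [Hi1 Hi2]]|Hno].
    apply (IH i); auto; lia. exists k; split; auto. intros i Hi. apply NNPP; intro; apply Hno; eauto. }
  destruct Hex as [j [Hj1 Hj2]].
  destruct b; exists j; unfold shiftn; simpl; repeat split.
  - intros i Hi. rewrite (Hj2 i), (Hj2 (S i)); auto; lia.
  - destruct (s (S j)); congruence.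
  - apply Hj2; lia.
  - intros i Hi. rewrite (Hj2 i), (Hj2 (S i)); auto; lia.
  - apply Hj2; lia.
  - destruct (s (S j)); congruence.
Qed.

Section LX.
Variables (X : Seq -> R) (d : nat).
Hypothesis HX : forall s j n, X (shiftn j s) <= X (shiftn n s) <-> lex_le (shiftn j s) (shiftn n s).
Hypothesis Hd : (1 <= d)%nat.

Definition Lex (s : Seq) a b := lex_le (shiftn a s) (shiftn b s).
Definition xv (s : Seq) (k : nat) := fun i => X (shiftn (d - i) (shiftn k s)).

Lemma xv_le s k i j : (i <= d)%nat -> (j <= d)%nat -> (xv s k i <= xv s k j <-> Lex s (k + d - i) (k + d - j)).
Proof. intros Hi Hj. unfold xv, Lex. rewrite !shiftn_add. replace (k + (d - i))%nat with (k + d - i)%nat by lia.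
  replace (k + (d - j))%nat with (k + d - j)%nat by lia. apply HX. Qed.

Lemma ord_xv r s k : ord_set X d r (shiftn k s) <-> has_pattern d (xv s k) r.
Proof. reflexivity. Qed.

Lemma meas_ord r : measurable (ord_set X d r).
Proof. apply meas_ext with (fun s => forall l, (1 <= l <= d)%nat ->
     Lex s (d - nth l r 0%nat) (d - nth (l - 1) r 0%nat) /\
     (Lex s (d - nth (l - 1) r 0%nat) (d - nth l r 0%nat) /\ Lex s (d - nth l r 0%nat) (d - nth (l - 1) r 0%nat) ->
        (nth (l - 1) r 0%nat > nth l r 0%nat)%nat)).
  - apply meas_cinter; intro l. apply meas_impl. apply meas_const. apply meas_and. apply meas_lexle.
    apply meas_impl. apply meas_and; apply meas_lexle. apply meas_const.
  - intro s. unfold ord_set, has_pattern, Lex. split; intros H l Hl; specialize (H l Hl).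
    + rewrite <- !HX in H. destruct H as [H1 H2]. split. lra. intro He; apply H2. lra.
    + rewrite <- !HX. destruct H as [H1 H2]. split. lra. intros [H3 H4]. apply H2; lra.
Qed.

Lemma same_pat s t k : (forall a b, (k <= a <= k + d)%nat -> (k <= b <= k + d)%nat -> (Lex s a b <-> Lex t a b)) ->
  forall r, is_perm d r -> (ord_set X d r (shiftn k s) <-> ord_set X d r (shiftn k t)).
Proof. intros H r Hr. rewrite !ord_xv. split; apply pat_det; auto; intros i j Hi Hj; rewrite !xv_le by auto.
  apply H; lia. symmetry; apply H; lia. Qed.

Definition Dif (s : Seq) a b := ~ (forall i, s (a + i)%nat = s (b + i)%nat).

Lemma xv_neq s k i j : (i <= d)%nat -> (j <= d)%nat -> Dif s (k + d - i) (k + d - j) -> xv s k i <> xv s k j.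
Proof. intros Hi Hj HD He. apply HD. intro l.
  assert (H1 : Lex s (k + d - i) (k + d - j)) by (apply xv_le; auto; lra).
  assert (H2 : Lex s (k + d - j) (k + d - i)) by (apply xv_le; auto; lra).
  pose proof (lex_antisym _ _ H1 H2 l). exact H. Qed.

Lemma pair_pat s t k r a b : is_perm d r -> ord_set X d r (shiftn k s) -> ord_set X d r (shiftn k t) ->
  (k <= a <= k + d)%nat -> (k <= b <= k + d)%nat -> Dif s a b -> Dif t a b -> (Lex s a b <-> Lex t a b).
Proof. intros Hr Hs Ht Ha Hb Ds Dt. rewrite ord_xv in Hs, Ht.
  set (i := (k + d - a)%nat). set (j := (k + d - b)%nat).
  assert (Ea : a = (k + d - i)%nat) by (unfold i; lia). assert (Eb : b = (k + d - j)%nat) by (unfold j; lia).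
  rewrite Ea, Eb in *. rewrite <- !xv_le by (unfold i, j; lia).
  apply (pat_pair d (xv s k) (xv t k) r); auto; try (unfold i, j; lia); apply xv_neq; auto; unfold i, j; lia. Qed.

Definition NC (s : Seq) i := exists k, s (i + k)%nat <> s i.

Lemma sym_lex s i : NC s i -> (s i = false <-> Lex s i (S i)).
Proof. intros [k Hk]. unfold Lex. rewrite <- (Nat.add_1_r i), <- shiftn_add.
  pose proof (lex_nonconst (shiftn i s) (s i) k) as H. unfold shiftn at 1 2 in H. rewrite Nat.add_0_r in H.
  specialize (H eq_refl Hk). destruct (s i) eqn:E.
  - split; [discriminate|]. intro Hl. exfalso. apply (lex_lt_not_le _ _ H Hl).
  - split; auto. intros _. left; exact H. Qed.

Lemma NC_Dif s i : NC s i -> Dif s i (S i).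
Proof. intros [k Hk] H. apply Hk. clear Hk. induction k. rewrite Nat.add_0_r; auto.
  rewrite <- IHk. replace (i + S k)%nat with (S i + k)%nat by lia. symmetry; apply H. Qed.

Lemma sym_det s t r i : is_perm d r -> ord_set X d r s -> ord_set X d r t -> (i < d)%nat -> NC s i -> NC t i -> s i = t i.
Proof. intros Hr Hs Ht Hi Ns Nt.
  assert (E : Lex s i (S i) <-> Lex t i (S i)).
  { apply (pair_pat s t 0 r); auto; try lia; apply NC_Dif; auto. }
  rewrite <- (sym_lex s i Ns), <- (sym_lex t i Nt) in E. destruct (s i), (t i); intuition congruence. Qed.

End LX.

Lemma Lex_step s a b : s a = s b -> (Lex s a b <-> Lex s (S a) (S b)).
Proof. intro H. unfold Lex. rewrite lex_le_cons. rewrite !shiftn_add. rewrite !(Nat.add_1_r). reflexivity.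
  unfold shiftn; rewrite !Nat.add_0_r; auto. Qed.

Lemma Lex_ft s a b : s a = false -> s b = true -> Lex s a b.
Proof. intros. apply lex_le_ft; unfold shiftn; rewrite Nat.add_0_r; auto. Qed.
Lemma Lex_tf s a b : s a = true -> s b = false -> ~ Lex s a b.
Proof. intros. apply lex_le_tf; unfold shiftn; rewrite Nat.add_0_r; auto. Qed.


Lemma nth_pre x n j : (j < n)%nat -> nth j (pre x n) false = x j.
Proof. revert x j; induction n; intros x j Hj. lia. destruct j; simpl; auto. rewrite IHn by lia. reflexivity. Qed.

Lemma cyl_pre x n s : cylinder (pre x n) s <-> forall j, (j < n)%nat -> s j = x j.
Proof. unfold cylinder. rewrite pre_len. split; intros H j Hj; rewrite (H j Hj); rewrite nth_pre; auto. Qed.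

Lemma pre_snoc x n : pre x (S n) = pre x n ++ [x n].
Proof. revert x; induction n; intro x. reflexivity. change (x 0%nat :: pre (shiftn 1 x) (S n) = x 0%nat :: (pre (shiftn 1 x) n ++ [x (S n)])).
  rewrite IHn. reflexivity. Qed.

Section MARK.
Variables (Q : bool -> bool -> R) (p : bool -> R) (m : set_of Seq -> R) (X : Seq -> R) (d : nat).
Hypotheses (HQ : stochastic Q) (Hp : stationary_pos Q p) (Hmk : markov_measure Q p m).
Hypothesis HX : forall s j n, X (shiftn j s) <= X (shiftn n s) <-> lex_le (shiftn j s) (shiftn n s).
Hypothesis Hd : (1 <= d)%nat.

Let Hm := Hm Q p m Hmk.

Lemma reduce s t K r : (forall a b, a <> b -> Dif s a b) -> (forall a b, a <> b -> Dif t a b) ->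
  (forall i, (i < K + d)%nat -> s i = t i) -> is_perm d r -> ord_set X d r (shiftn K s) -> ord_set X d r (shiftn K t) ->
  forall n a b, (Nat.max a b + n = K + d)%nat -> (a <= b + d)%nat -> (b <= a + d)%nat -> (Lex s a b <-> Lex t a b).
Proof. intros Ns Nt Hst Hr HsK HtK n. induction n; intros a b Hmax Hab Hba.
  - destruct (Nat.eq_dec a b) as [->|Hne]. split; intros; apply lex_le_refl.
    apply (pair_pat X d HX Hd s t K r); auto; lia.
  - assert (Ha : (a < K + d)%nat) by lia. assert (Hb : (b < K + d)%nat) by lia.
    destruct (Bool.bool_dec (s a) (s b)) as [E|E].
    + rewrite (Lex_step s a b E), (Lex_step t a b). apply IHn; lia. rewrite <- !Hst; auto.
    + destruct (s a) eqn:Ea; destruct (s b) eqn:Eb; try congruence.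
      * split; intro H; exfalso; [apply (Lex_tf s a b)|apply (Lex_tf t a b)]; auto; rewrite <- Hst; auto.
      * split; intros _; apply Lex_ft; auto; rewrite <- Hst; auto.
Qed.

Lemma reduce_pat s t K r : (forall a b, a <> b -> Dif s a b) -> (forall a b, a <> b -> Dif t a b) ->
  (forall i, (i < K + d)%nat -> s i = t i) -> is_perm d r -> ord_set X d r (shiftn K s) -> ord_set X d r (shiftn K t) ->
  forall j r', (j <= K)%nat -> is_perm d r' -> (ord_set X d r' (shiftn j s) <-> ord_set X d r' (shiftn j t)).
Proof. intros Ns Nt Hst Hr HsK HtK j r' Hj Hr'. apply (same_pat X d HX Hd); auto.
  intros a b Ha Hb. apply (reduce s t K r Ns Nt Hst Hr HsK HtK (K + d - Nat.max a b)); lia. Qed.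

Definition chain (i : nat -> list nat) k := chain_set (ord_set X d) i k.

Lemma meas_chain i k : measurable (chain i k).
Proof. apply meas_cinter; intro j. apply meas_impl. apply meas_const. apply meas_shift, (meas_ord X d HX). Qed.

Variable SS : set_of Seq.
Hypotheses (HSm : measurable SS) (HS0 : m (fun s => ~ SS s) = 0) (HSsh : forall s, SS s -> SS (shiftn 1 s)).
Hypothesis HA1 : forall s t r, SS s -> SS t -> is_perm d r -> ord_set X d r s -> ord_set X d r t -> forall i, (i < d)%nat -> s i = t i.
Hypothesis HA2 : forall s t K r, SS s -> SS t -> (forall i, (i < K + d)%nat -> s i = t i) -> is_perm d r ->
  ord_set X d r (shiftn K s) -> ord_set X d r (shiftn K t) ->
  forall j r', (j <= K)%nat -> is_perm d r' -> (ord_set X d r' (shiftn j s) <-> ord_set X d r' (shiftn j t)).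

Lemma HSshn n s : SS s -> SS (shiftn n s).
Proof. revert s; induction n; intros s H. exact H. change (SS (shiftn n (shiftn 1 s))). apply IHn, HSsh, H. Qed.

Lemma markov_abs : markov_property (is_perm d) (ord_set X d) m.
Proof. intros n i Hn Hi Hpos. destruct n as [|k]; [lia|]. replace (S k - 1)%nat with k in * by lia.
  fold (chain i k) in Hpos |- *. fold (chain i (S k)).
  assert (HZm : measurable (fun s => ~ SS s)) by (apply meas_compl; auto).
  destruct (classic (exists s0, chain i k s0 /\ SS s0)) as [[s0 [Hc0 HS0']]|Hno].
  2: { exfalso. replace (m (chain i k)) with (m empty) in Hpos. rewrite (m_empty m Hm) in Hpos; lra.
       apply (m_eq_mod m Hm _ _ _ meas_empty (meas_chain i k) HZm HS0). intros x Hx. unfold empty. split; [tauto|].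
       intro H; apply Hno; exists x; split; auto. apply NNPP; auto. }
  set (u := pre s0 k). set (c := s0 k).
  assert (Hu : u ++ [c] = pre s0 (S k)) by (unfold u, c; rewrite pre_snoc; auto).
  assert (Hlu : length u = k) by (unfold u; apply pre_len).
  set (A := ord_set X d (i k)).
  set (B := fun s => ord_set X d (i k) s /\ ord_set X d (i (S k)) (shiftn 1 s)).
  assert (HAm : measurable A) by apply (meas_ord X d HX).
  assert (HBm : measurable B) by (apply meas_and; [apply (meas_ord X d HX)| apply meas_shift1, (meas_ord X d HX)]).
  assert (C1 : forall s, SS s -> (chain i k s <-> cylinder (u ++ [c]) s /\ A (shiftn (length u) s))).
  { intros s Hs. rewrite Hu, Hlu, cyl_pre. split.
    - intro H. split. intros j Hj.
      pose proof (HA1 (shiftn j s) (shiftn j s0) (i j) (HSshn j s Hs) (HSshn j s0 HS0') (Hi j ltac:(lia)) (H j ltac:(lia)) (Hc0 j ltac:(lia)) 0%nat ltac:(lia)) as E.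
      unfold shiftn in E; rewrite !Nat.add_0_r in E; exact E.
      apply H; lia.
    - intros [H1 H2].
      assert (Hag : forall j, (j < k + d)%nat -> s0 j = s j).
      { intros j Hj. destruct (Nat.lt_ge_cases j (S k)). symmetry; apply H1; auto.
        pose proof (HA1 (shiftn k s) (shiftn k s0) (i k) (HSshn k s Hs) (HSshn k s0 HS0') (Hi k ltac:(lia)) H2 (Hc0 k ltac:(lia)) (j - k)%nat ltac:(lia)) as E.
        unfold shiftn in E. replace (k + (j - k))%nat with j in E by lia. auto. }
      intros j Hj. apply (HA2 s0 s k (i k) HS0' Hs Hag (Hi k ltac:(lia)) (Hc0 k ltac:(lia)) H2 j (i j) Hj (Hi j ltac:(lia))).
      apply Hc0; auto. }
  assert (C2 : forall s, SS s -> (chain i (S k) s <-> cylinder (u ++ [c]) s /\ B (shiftn (length u) s))).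
  { intros s Hs. unfold B. rewrite shiftn_add, Nat.add_1_r, Hlu.
    assert (E : chain i (S k) s <-> chain i k s /\ ord_set X d (i (S k)) (shiftn (S k) s)).
    { unfold chain, chain_set. split. intro H; split; auto. intros [H1 H2] j Hj. destruct (Nat.eq_dec j (S k)) as [->|]; auto. apply H1; lia. }
    rewrite E, C1, Hlu by auto. unfold A. tauto. }
  assert (C3 : forall Y, measurable Y -> (forall t, Y t -> A t) -> m (fun s => cylinder [c] s /\ Y s) = m Y).
  { intros Y HY HYA. apply (m_eq_mod m Hm _ _ _ (meas_and _ _ (meas_cyl _) HY) HY HZm HS0).
    intros t Ht. split; [tauto|]. intro HYt. split; auto. intros j Hj. simpl in Hj. assert (j = 0%nat) by lia; subst j. simpl.
    apply NNPP in Ht. pose proof (HA1 t (shiftn k s0) (i k) Ht (HSshn k s0 HS0') (Hi k ltac:(lia)) (HYA t HYt) (Hc0 k ltac:(lia)) 0%nat ltac:(lia)) as E.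
    unfold shiftn in E; rewrite Nat.add_0_r in E. exact E. }
  assert (Ek : m (chain i k) = cyl_mass Q p (u ++ [c]) / p c * m A).
  { rewrite <- (C3 A HAm (fun t H => H)). rewrite <- (product Q p m Hp Hmk u c A HAm).
    apply (m_eq_mod m Hm _ _ _ (meas_chain i k) (meas_and _ _ (meas_cyl _) (meas_shift _ _ HAm)) HZm HS0).
    intros x Hx. apply C1. apply NNPP; auto. }
  assert (ESk : m (chain i (S k)) = cyl_mass Q p (u ++ [c]) / p c * m B).
  { rewrite <- (C3 B HBm (fun t H => proj1 H)). rewrite <- (product Q p m Hp Hmk u c B HBm).
    apply (m_eq_mod m Hm _ _ _ (meas_chain i (S k)) (meas_and _ _ (meas_cyl _) (meas_shift _ _ HBm)) HZm HS0).
    intros x Hx. apply C2. apply NNPP; auto. }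
  fold B. fold A. rewrite Ek, ESk. rewrite Ek in Hpos.
  set (al := cyl_mass Q p (u ++ [c]) / p c) in *.
  assert (Hal : al <> 0) by (intro E; rewrite E in Hpos; lra). assert (HmA : m A <> 0) by (intro E; rewrite E in Hpos; lra).
  change (m (fun s : Seq => A s /\ ord_set X d (i (S k)) (shiftn 1 s))) with (m B). field; auto.
Qed.

End MARK.

Fixpoint allL (B L : nat) : list (list nat) :=
  match L with O => [[]] | S L => flat_map (fun x => map (cons x) (allL B L)) (seq 0 B) end.

Lemma allL_complete B L r : length r = L -> (forall x, In x r -> (x < B)%nat) -> In r (allL B L).
Proof. revert r; induction L; intros r Hl Hr; destruct r as [|a r]; simpl in Hl; try lia.
  left; auto. simpl. apply in_flat_map. exists a. split. apply in_seq. specialize (Hr a (or_introl eq_refl)); lia.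
  apply in_map. apply IHL. lia. intros x Hx; apply Hr; right; auto. Qed.

Section GEN.
Variables (Q : bool -> bool -> R) (p : bool -> R) (m : set_of Seq -> R) (X : Seq -> R) (d : nat).
Hypotheses (HQ : stochastic Q) (Hp : stationary_pos Q p) (Hmk : markov_measure Q p m).
Hypothesis HX : forall s j n, X (shiftn j s) <= X (shiftn n s) <-> lex_le (shiftn j s) (shiftn n s).
Hypothesis Hd : (1 <= d)%nat.
Hypothesis HP1 : m (Per 1) = 0.

Let Hm := Hm Q p m Hmk.

Definition G (E : set_of Seq) := exists n i, is_perm d i /\ E = (fun s => ord_set X d i (shiftn n s)).
Definition SigP := gen_sigma G.
Definition approx (B : set_of Seq) := exists A, SigP A /\ m (symdiff A B) = 0.

Lemma sig_meas A : SigP A -> measurable A.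
Proof. intro H; induction H.
  - destruct H as [n [i [_ ->]]]. apply meas_shift, (meas_ord X d HX).
  - apply meas_compl; auto. - apply meas_cunion; auto. - apply meas_ext with A; auto. Qed.

Lemma sig_shift A : SigP A -> SigP (fun s => A (shiftn 1 s)).
Proof. intro H; induction H.
  - destruct H as [n [i [Hi ->]]]. apply gs_base. exists (S n), i. split; auto.
  - apply gs_compl; auto. - apply gs_union; auto. - apply gs_ext with (fun s => A (shiftn 1 s)); auto. Qed.

Lemma sig_full : SigP full.
Proof. set (E := fun s => ord_set X d (seq 0 (S d)) (shiftn 0 s)).
  assert (HE : SigP E) by (apply gs_base; exists 0%nat, (seq 0 (S d)); split; auto; apply Permutation_refl).
  apply gs_ext with (fun s => exists n, two E (fun s => ~ E s) n s).
  apply gs_union; intros [|n]; simpl; auto. apply gs_compl; auto.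
  intro x; unfold full; split; auto. intros _. destruct (classic (E x)). exists 0%nat; auto. exists 1%nat; auto. Qed.

Lemma sig_empty : SigP empty.
Proof. apply gs_ext with (fun s => ~ full s). apply gs_compl, sig_full. unfold full, empty; tauto. Qed.

Lemma sig_and A B : SigP A -> SigP B -> SigP (fun s => A s /\ B s).
Proof. intros HA HB. apply gs_ext with (fun s => ~ exists n, two (fun s => ~ A s) (fun s => ~ B s) n s).
  apply gs_compl, gs_union; intros [|n]; simpl; apply gs_compl; auto.
  intro x; split. intro H. split; apply NNPP; intro; apply H; [exists 0%nat|exists 1%nat]; auto.
  intros [H1 H2] [[|n] H]; simpl in H; auto. Qed.

Lemma meas_symdiff A B : measurable A -> measurable B -> measurable (symdiff A B).
Proof. intros. apply meas_or; apply meas_and; auto; apply meas_compl; auto. Qed.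

Lemma approx_compl B : measurable B -> approx B -> approx (fun s => ~ B s).
Proof. intros HB [A [HA H0]]. exists (fun s => ~ A s). split. apply gs_compl; auto.
  rewrite <- H0. f_equal. apply set_ext; intro x; unfold symdiff. destruct (classic (A x)), (classic (B x)); tauto. Qed.

Lemma approx_shift B : measurable B -> approx B -> approx (fun s => B (shiftn 1 s)).
Proof. intros HB [A [HA H0]]. exists (fun s => A (shiftn 1 s)). split. apply sig_shift; auto.
  rewrite <- H0. apply (m_shift1 Q p m Hp Hmk (symdiff A B)). apply meas_symdiff; auto. apply sig_meas; auto. Qed.

Lemma approx_and B1 B2 : measurable B1 -> measurable B2 -> approx B1 -> approx B2 -> approx (fun s => B1 s /\ B2 s).
Proof. intros H1 H2 [A1 [HA1 E1]] [A2 [HA2 E2]]. exists (fun s => A1 s /\ A2 s). split. apply sig_and; auto.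
  pose proof (sig_meas _ HA1); pose proof (sig_meas _ HA2).
  apply (m_null_sub m Hm _ (fun s => symdiff A1 B1 s \/ symdiff A2 B2 s)).
  apply meas_symdiff; apply meas_and; auto. apply meas_or; apply meas_symdiff; auto.
  apply (m_null_or m Hm); auto; apply meas_symdiff; auto.
  intros x; unfold symdiff; tauto. Qed.

Lemma approx_union (B : nat -> set_of Seq) : (forall n, measurable (B n)) -> (forall n, approx (B n)) -> approx (fun s => exists n, B n s).
Proof. intros HB HA. destruct (functional_choice (fun n A => SigP A /\ m (symdiff A (B n)) = 0) HA) as [A HAn].
  exists (fun s => exists n, A n s). split. apply gs_union; intro n; apply HAn.
  assert (HAm : forall n, measurable (A n)) by (intro n; apply sig_meas, HAn).
  apply (m_null_sub m Hm _ (fun s => exists n, symdiff (A n) (B n) s)).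
  apply meas_symdiff; apply meas_cunion; auto. apply meas_cunion; intro; apply meas_symdiff; auto.
  apply (m_null_union m Hm). intro; apply meas_symdiff; auto. intro n; apply HAn.
  intros x [[[n Hn] Hno]|[[n Hn] Hno]]; exists n; unfold symdiff; [left|right]; split; auto; intro; apply Hno; eauto. Qed.

Definition Pn (r : list nat) := is_perm d r /\ forall y, has_pattern d y r -> y (d - 1)%nat >= y d.

Lemma D_char s : ~ Per 1 s -> ((exists r, Pn r /\ ord_set X d r s) <-> s 0%nat = false).
Proof. intro HP.
  assert (HNC : NC s 0). { apply NNPP; intro H. apply HP. intro j. apply NNPP; intro Hj. apply H.
     destruct (Bool.bool_dec (s j) (s 0%nat)). exists (S j). simpl. intro E; apply Hj; simpl; congruence. exists j. simpl; auto. }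
  assert (E1 : (0 + d - d = 0)%nat) by lia. assert (E2 : (0 + d - (d - 1) = 1)%nat) by lia.
  rewrite (sym_lex s 0 HNC). split.
  - intros [r [[Hr Hpr] Hs]]. change (has_pattern d (xv X d s 0) r) in Hs. apply Hpr in Hs. apply Rge_le in Hs.
    rewrite (xv_le X d HX Hd s 0 d (d-1)) in Hs by lia. rewrite E1, E2 in Hs. exact Hs.
  - intro HL. destruct (pattern_ex d (xv X d s 0)) as [r [Hr Hs]]. exists r. split; [split; auto|].
    + intros y Hy.
      assert (Hgt : xv X d s 0 (d - 1)%nat > xv X d s 0 d).
      { assert (Hle : xv X d s 0 d <= xv X d s 0 (d - 1)%nat) by (rewrite (xv_le X d HX Hd) by lia; rewrite E1, E2; exact HL).
        assert (Hne : xv X d s 0 (d - 1)%nat <> xv X d s 0 d). { apply (xv_neq X d HX Hd); try lia. rewrite E1, E2.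
          intro H. apply (NC_Dif d Hd s 0 HNC). intro i. symmetry. apply H. }
        lra. }
      destruct (pat_gt_pos d _ r Hr Hs (d - 1) d ltac:(lia) ltac:(lia) Hgt) as [pi [pj [Hpq [E3 E4]]]].
      pose proof (pat_chain d y r Hy pi pj ltac:(lia)). rewrite E3, E4 in H. exact H.
    + exact Hs.
Qed.

Lemma approx_s0 : approx (fun s => s 0%nat = false).
Proof. set (L := allL (S d) (S d)).
  set (D := fun s => exists n, Pn (nth n L []) /\ ord_set X d (nth n L []) s).
  exists D. split.
  - apply gs_union. intro n. destruct (classic (Pn (nth n L []))) as [H|H].
    + apply gs_ext with (fun s => ord_set X d (nth n L []) (shiftn 0 s)). apply gs_base. exists 0%nat, (nth n L []). split; auto. apply H.
      intro x; split; auto. intros [_ Hx]; exact Hx.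
    + apply gs_ext with empty. apply sig_empty. unfold empty; tauto.
  - apply (m_null_sub m Hm _ (Per 1)); auto.
    apply meas_symdiff. apply meas_cunion; intro n; apply meas_and. apply meas_const. apply (meas_ord X d HX). apply meas_coord.
    apply meas_Per.
    intros x Hx. apply NNPP; intro HP.
    assert (HDx : D x <-> exists r, Pn r /\ ord_set X d r x).
    { unfold D; split. intros [n Hn]; eauto. intros [r [Hr Hrx]].
      assert (Hin : In r L). { apply allL_complete. apply (perm_len d r (proj1 Hr)).
        intros y Hy. apply (Permutation_in _ (proj1 Hr)) in Hy. apply in_seq in Hy; lia. }
      destruct (In_nth L r [] Hin) as [n [_ Hn]]. exists n. rewrite Hn; auto. }
    unfold symdiff in Hx. rewrite HDx, (D_char x HP) in Hx. tauto.
Qed.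

Lemma approx_cyl w : approx (cylinder w).
Proof. induction w as [|b w IH].
  - exists full. split. apply sig_full. replace (symdiff full (cylinder [])) with empty. apply (m_empty m Hm).
    apply set_ext; intro x; unfold symdiff, full, empty. split; [tauto|]. intros [[_ H]|[_ H]]; apply H; auto. intros i Hi; simpl in Hi; lia.
  - replace (cylinder (b :: w)) with (fun s => s 0%nat = b /\ (fun s => cylinder w (shiftn 1 s)) s).
    apply approx_and. apply meas_coord. apply meas_shift1, meas_cyl.
    + destruct b.
      * replace (fun s : Seq => s 0%nat = true) with (fun s : Seq => ~ (s 0%nat = false)).
        apply approx_compl. apply meas_coord. apply approx_s0.
        apply set_ext; intro x; destruct (x 0%nat); intuition congruence.
      * apply approx_s0.
    + apply approx_shift. apply meas_cyl. exact IH.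
    + apply set_ext; intro x; rewrite cyl_cons; tauto.
Qed.

Lemma approx_all B : measurable B -> approx B.
Proof. intro H. induction H.
  - destruct H as [w ->]; apply approx_cyl.
  - apply approx_compl; auto.
  - apply approx_union; auto.
  - replace B with A; auto. apply set_ext; auto.
Qed.

Lemma gen_thm : generating (is_perm d) (ord_set X d) m.
Proof. intros B HB. exact (approx_all B HB). Qed.

End GEN.

Section FIN.
Variables (Q : bool -> bool -> R) (p : bool -> R) (m : set_of Seq -> R) (X : Seq -> R) (d : nat).
Hypotheses (HQ : stochastic Q) (Hp : stationary_pos Q p) (Hmk : markov_measure Q p m) (Herg : ergodic m).
Hypothesis HX : forall s j n, X (shiftn j s) <= X (shiftn n s) <-> lex_le (shiftn j s) (shiftn n s).
Hypothesis Hd : (1 <= d)%nat.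

Let Hm := Hm Q p m Hmk.

Lemma HP1 : m (Per 1) = 0.
Proof. apply (Per_null Q p m Hmk 1 (le_n _)). intros x Hx.
  assert (Hc : forall k, x k = x 0%nat). { induction k; auto. rewrite <- IHk. apply (Hx k). }
  apply (small_const Q p HQ Hp (x 0%nat)); auto.
  destruct (x 0%nat). apply (Q11_lt1 Q p m HQ Hp Hmk Herg). apply (Q00_lt1 Q p m HQ Hp Hmk Herg). Qed.

Definition Alt : set_of Seq := fun s => forall k, s (S k) = negb (s k).

Lemma alt_eq s t : Alt s -> Alt t -> s 0%nat = t 0%nat -> s = t.
Proof. intros Hs Ht H0. apply functional_extensionality. intro k; induction k; auto. rewrite Hs, Ht, IHk; auto. Qed.

Lemma markov_swap : Q false false = 0 -> Q true true = 0 -> markov_property (is_perm d) (ord_set X d) m.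
Proof. intros H00 H11. apply (markov_abs Q p m X d Hp Hmk HX Hd Alt).
  - apply meas_cinter; intro k. apply meas_ext with (fun s => (s k = false /\ s (S k) = true) \/ (s k = true /\ s (S k) = false)).
    apply meas_or; apply meas_and; apply meas_coord. intro x; destruct (x k), (x (S k)); simpl; intuition congruence.
  - apply (m_null_sub m Hm _ (fun s => exists k, cylinder [false; false] (shiftn k s) \/ cylinder [true; true] (shiftn k s))).
    apply meas_compl, meas_cinter; intro k. apply meas_ext with (fun s => (s k = false /\ s (S k) = true) \/ (s k = true /\ s (S k) = false)).
    apply meas_or; apply meas_and; apply meas_coord. intro x; destruct (x k), (x (S k)); simpl; intuition congruence.
    apply meas_cunion; intro; apply meas_or; apply meas_shift, meas_cyl.
    apply (m_null_union m Hm). intro; apply meas_or; apply meas_shift, meas_cyl.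
    intro k. apply (m_null_or m Hm); try (apply meas_shift, meas_cyl); rewrite (m_shift Q p m Hp Hmk) by apply meas_cyl;
      rewrite (m_cyl Q p m Hmk); simpl; [rewrite H00|rewrite H11]; ring.
    intros x Hx. apply not_all_ex_not in Hx. destruct Hx as [k Hk]. exists k. rewrite !cyl2.
    destruct (x k), (x (S k)); simpl in Hk; intuition congruence.
  - intros s Hs k. exact (Hs (S k)).
  - intros s t r Hs Ht Hr Hps Hpt i Hi.
    assert (H0 : s 0%nat = t 0%nat).
    { apply (sym_det X d HX Hd s t r 0 Hr Hps Hpt ltac:(lia)).
      exists 1%nat; simpl; rewrite Hs; destruct (s 0%nat); discriminate.
      exists 1%nat; simpl; rewrite Ht; destruct (t 0%nat); discriminate. }
    rewrite (alt_eq s t Hs Ht H0); auto.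
  - intros s t K r Hs Ht Hst _ _ _ j r' _ _. rewrite (alt_eq s t Hs Ht (Hst 0%nat ltac:(lia))). tauto.
Qed.

Definition NT : set_of Seq := fun s => forall a b, a <> b -> Dif s a b.

Lemma NT_NC s i : NT s -> NC s i.
Proof. intro H. apply NNPP; intro Hn. apply (H i (S i) ltac:(lia)). intro j.
  assert (E : forall k, s (i + k)%nat = s i) by (intro k; apply NNPP; intro; apply Hn; exists k; auto).
  rewrite E. replace (S i + j)%nat with (i + S j)%nat by lia. rewrite E; auto. Qed.

Lemma markov_nonswap : ~ (Q false false = 0 /\ Q true true = 0) -> markov_property (is_perm d) (ord_set X d) m.
Proof. intro Hns.
  assert (Hlam : lam0 Q < 1).
  { pose proof (Q00_lt1 Q p m HQ Hp Hmk Herg). pose proof (Q11_lt1 Q p m HQ Hp Hmk Herg).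
    pose proof HQ as [HQ0 HQs]. unfold lam0. apply Rmax_lub_lt. apply Rmax_lub_lt; auto.
    pose proof (HQs false); pose proof (HQs true). pose proof (HQ0 false false); pose proof (HQ0 true true).
    pose proof (HQ0 false true); pose proof (HQ0 true false).
    destruct (Rlt_dec (Q false true * Q true false) 1); auto. exfalso. apply Hns. split; nra. }
  apply (markov_abs Q p m X d Hp Hmk HX Hd NT).
  - apply meas_cinter; intro a. apply meas_cinter; intro b. apply meas_impl. apply meas_const.
    apply meas_compl, meas_cinter; intro i; apply meas_coord_eq.
  - apply (m_null_sub m Hm _ (fun s => exists a, exists q, Per (S q) (shiftn a s))).
    apply meas_compl. apply meas_cinter; intro a. apply meas_cinter; intro b. apply meas_impl. apply meas_const.
    apply meas_compl, meas_cinter; intro i; apply meas_coord_eq.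
    apply meas_cunion; intro a; apply meas_cunion; intro q; apply meas_shift, meas_Per.
    apply (m_null_union m Hm). intro a; apply meas_cunion; intro q; apply meas_shift, meas_Per.
    intro a. apply (m_null_union m Hm). intro q; apply meas_shift, meas_Per.
    intro q. rewrite (m_shift Q p m Hp Hmk) by apply meas_Per.
    apply (Per_null Q p m Hmk (S q) ltac:(lia)). intros x _. apply (small_all Q p HQ Hp x Hlam).
    intros x Hx. apply NNPP; intro Hno. apply Hx. intros a b Hab He.
    apply Hno. destruct (Nat.lt_total a b) as [Hl|[Hl|Hl]]; [|contradiction|].
    + exists a, (b - a - 1)%nat. intro j. unfold shiftn. replace (a + (S (b - a - 1) + j))%nat with (b + j)%nat by lia. symmetry; apply He.
    + exists b, (a - b - 1)%nat. intro j. unfold shiftn. replace (b + (S (a - b - 1) + j))%nat with (a + j)%nat by lia. apply He.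
  - intros s Hs a b Hab. exact (Hs (S a) (S b) ltac:(lia)).
  - intros s t r Hs Ht Hr Hps Hpt i Hi. apply (sym_det X d HX Hd s t r i Hr Hps Hpt Hi); apply NT_NC; auto.
  - intros s t K r Hs Ht Hst Hr HsK HtK j r' Hj Hr'. apply (reduce_pat X d HX Hd s t K r); auto.
Qed.

End FIN.

Theorem lemma2 (Q : bool -> bool -> R) (p : bool -> R) (m : set_of Seq -> R)
  (X : Seq -> R) :
  stochastic Q -> stationary_pos Q p -> markov_measure Q p m -> ergodic m ->
  random_variable X -> lexicographic_like m X ->
  forall d : nat, (1 <= d)%nat ->
    generating (is_perm d) (ord_set X d) m /\
    markov_property (is_perm d) (ord_set X d) m.
Proof. intros HQ Hp Hmk Herg _ [_ HX] d Hd. split.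
  - apply (gen_thm Q p m X d Hp Hmk HX Hd). apply (HP1 Q p m HQ Hp Hmk Herg).
  - destruct (classic (Q false false = 0 /\ Q true true = 0)) as [[H1 H2]|H].
    + apply (markov_swap Q p m X d Hp Hmk HX Hd); auto.
    + apply (markov_nonswap Q p m X d HQ Hp Hmk Herg HX Hd); auto.
Qed.
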